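(* Let $K=\{p\in\mathbb{R}^3:0\le p_3\le\theta(p_1,p_2)\}$, let $p\in\mathbb{R}^3$ and suppose its Euclidean projection onto $K$ is of the form $p^{pr}=(p^{pr}_1,p^{pr}_2,\theta(p^{pr}_1,p^{pr}_2))$ with $(p^{pr}_1,p^{pr}_2)\in(0,\infty)^2$. For $q>0$ let $w(q)=(q^{1/2},q^{-1/2},\theta(q^{1/2},q^{-1/2}))$ and $n(q)=(-\partial_1\theta(q^{1/2},q^{-1/2}),-\partial_2\theta(q^{1/2},q^{-1/2}),1)$. Then there is a unique $(q,\tau)\in(0,\infty)^2$ with $p^{pr}=\tau\,w(q)$; this $q$ is the unique root of $q\mapsto\langle p,w(q)\times n(q)\rangle$ and $\tau=\langle p,w(q)/\|w(q)\|^2\rangle$.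
   Context: $\theta:[0,\infty)^2\to[0,\infty)$ is continuous, concave, 1-homogeneous, symmetric, $C^\infty$ on $(0,\infty)^2$, with $\theta(0,s)=\theta(s,0)=0$, $\theta(s,s)=s$, $\theta(s,t)>0$ for $s,t>0$, and nondecreasing in each argument; $\theta(s,t)=-\infty$ if $\min\{s,t\}<0$. $\times$ denotes the cross product in $\mathbb{R}^3$ and $\langle\cdot,\cdot\rangle$, $\|\cdot\|$ the Euclidean inner product and norm. *)

(* Defs.v *)
From Stdlib Require Import Reals Lra List.
From Coquelicot Require Import Coquelicot.
Open Scope R_scope.

Definition vec3 := (R * R * R)%type.
Definition v1 (v : vec3) : R := fst (fst v).
Definition v2 (v : vec3) : R := snd (fst v).
Definition v3 (v : vec3) : R := snd v.

Definition dot3 (u v : vec3) : R := v1 u * v1 v + v2 u * v2 v + v3 u * v3 v.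
Definition norm3 (u : vec3) : R := sqrt (dot3 u u).
Definition cross3 (u v : vec3) : vec3 :=
  (v2 u * v3 v - v3 u * v2 v, v3 u * v1 v - v1 u * v3 v, v1 u * v2 v - v2 u * v1 v).
Definition scal3 (a : R) (u : vec3) : vec3 := (a * v1 u, a * v2 u, a * v3 u).
Definition sub3 (u v : vec3) : vec3 := (v1 u - v1 v, v2 u - v2 v, v3 u - v3 v).

Definition quad (s t : R) : Prop := 0 <= s /\ 0 <= t.
Definition oquad (s t : R) : Prop := 0 < s /\ 0 < t.

Definition d1 (f : R -> R -> R) : R -> R -> R := fun s t => Derive (fun x => f x t) s.
Definition d2 (f : R -> R -> R) : R -> R -> R := fun s t => Derive (fun y => f s y) t.

Fixpoint dpart (l : list bool) (f : R -> R -> R) : R -> R -> R :=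
  match l with
  | nil => f
  | b :: l' => if b then d2 (dpart l' f) else d1 (dpart l' f)
  end.

Definition cont_within (D : R -> R -> Prop) (f : R -> R -> R) (s t : R) : Prop :=
  forall eps, 0 < eps -> exists delta, 0 < delta /\
    forall s' t', D s' t' -> Rabs (s' - s) < delta -> Rabs (t' - t) < delta ->
      Rabs (f s' t' - f s t) < eps.

Definition smooth_oquad (f : R -> R -> R) : Prop :=
  forall (l : list bool) s t, oquad s t ->
    ex_derive (fun x => dpart l f x t) s /\
    ex_derive (fun y => dpart l f s y) t /\
    cont_within oquad (dpart l f) s t.

(* Standing assumptions on theta (theta only matters on [0,oo)^2; its value
   -oo outside is encoded by the constraint p1,p2 >= 0 in the set K). *)
Definition theta_hyp (th : R -> R -> R) : Prop :=
  (forall s t, quad s t -> cont_within quad th s t) /\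
  (forall s t s' t' lam, quad s t -> quad s' t' -> 0 <= lam <= 1 ->
     lam * th s t + (1 - lam) * th s' t'
       <= th (lam * s + (1 - lam) * s') (lam * t + (1 - lam) * t')) /\
  (forall lam s t, 0 <= lam -> quad s t -> th (lam * s) (lam * t) = lam * th s t) /\
  (forall s t, quad s t -> th s t = th t s) /\
  smooth_oquad th /\
  (forall s, 0 <= s -> th 0 s = 0 /\ th s 0 = 0) /\
  (forall s, 0 <= s -> th s s = s) /\
  (forall s t, oquad s t -> 0 < th s t) /\
  (forall s s' t, 0 <= s -> s <= s' -> 0 <= t -> th s t <= th s' t) /\
  (forall s t t', 0 <= s -> 0 <= t -> t <= t' -> th s t <= th s t').

Definition inK (th : R -> R -> R) (p : vec3) : Prop :=
  0 <= v1 p /\ 0 <= v2 p /\ 0 <= v3 p /\ v3 p <= th (v1 p) (v2 p).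

Definition is_proj (th : R -> R -> R) (p x : vec3) : Prop :=
  inK th x /\ forall y, inK th y -> norm3 (sub3 p x) <= norm3 (sub3 p y).

Definition wq (th : R -> R -> R) (q : R) : vec3 :=
  (sqrt q, / sqrt q, th (sqrt q) (/ sqrt q)).
Definition nq (th : R -> R -> R) (q : R) : vec3 :=
  (- d1 th (sqrt q) (/ sqrt q), - d2 th (sqrt q) (/ sqrt q), 1).

(* Main.v *)
Require Import Defs.
From Stdlib Require Import Reals Lra Psatz.
From Coquelicot Require Import Coquelicot.
Open Scope R_scope.

Lemma deriv_eps f x l : is_derive f x l -> forall eps, 0 < eps ->
  exists delta, 0 < delta /\ forall k, k <> 0 -> Rabs k < delta ->
   Rabs ((f (x+k) - f x)/k - l) < eps.
Proof.
  intros H eps Heps. apply is_derive_Reals in H.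
  destruct (H eps Heps) as [d Hd]. exists d. split; [apply cond_pos|].
  intros k Hk Hk'. apply Hd; auto.
Qed.

Lemma deriv_nonneg f x l r : 0 < r -> (forall k, 0 < k < r -> f x <= f (x+k)) ->
  is_derive f x l -> 0 <= l.
Proof.
  intros Hr Hm Hd. destruct (Rle_or_lt 0 l) as [|Hl]; auto.
  destruct (deriv_eps f x l Hd (-l)) as [d [Hd0 Hd1]]; [lra|].
  set (k := Rmin d r / 2).
  assert (Hk : 0 < k < r /\ k < d).
  { unfold k; generalize (Rmin_l d r) (Rmin_r d r); intros.
    assert (0 < Rmin d r) by (apply Rmin_case; lra). lra. }
  specialize (Hd1 k ltac:(lra) ltac:(rewrite Rabs_pos_eq; lra)).
  specialize (Hm k ltac:(lra)).
  assert (0 <= (f (x+k) - f x)/k).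
  { apply Rdiv_le_0_compat; lra. }
  apply Rabs_def2 in Hd1. lra.
Qed.

Lemma deriv_min f x l r : 0 < r -> (forall k, Rabs k < r -> f x <= f (x+k)) ->
  is_derive f x l -> l = 0.
Proof.
  intros Hr Hm Hd.
  assert (0 <= l).
  { apply (deriv_nonneg f x l r); auto. intros k Hk. apply Hm. rewrite Rabs_pos_eq; lra. }
  assert (0 <= - l).
  { apply (deriv_nonneg (fun y => f (-y)) (-x) (-l) r); auto.
    - intros k Hk. replace (- (-x + k)) with (x + -k) by ring. rewrite Ropp_involutive.
      apply Hm. rewrite Rabs_Ropp, Rabs_pos_eq; lra.
    - evar (L : R). replace (-l) with L. apply (is_derive_comp f Ropp).
      rewrite Ropp_involutive. exact Hd.
      assert (HH : is_derive (fun y : R => - y) (-x) (-1)) by (auto_derive; auto; ring).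
      exact HH.
      unfold L. simpl. unfold scal, mult; simpl. unfold mult; simpl. assert (Z : forall z:R, -1*z = -z) by (intros; ring). apply Z. }
  lra.
Qed.

Lemma deriv_concave h r R l :
  (forall x y lam, 0 < x -> 0 < y -> 0 <= lam <= 1 ->
     lam * h x + (1 - lam) * h y <= h (lam * x + (1 - lam) * y)) ->
  0 < r -> 0 < R -> is_derive h r l -> h R <= h r + l * (R - r).
Proof.
  intros Hc Hr HR Hd.
  destruct (Rle_or_lt (h R) (h r + l * (R - r))) as [|HE]; auto. exfalso.
  set (E := h R - h r - l * (R - r)).
  assert (HRr : R - r <> 0). { intro Z. unfold E in *. replace R with r in * by lra. lra. }
  assert (Ha : 0 < Rabs (R - r)) by (apply Rabs_pos_lt; auto).
  destruct (deriv_eps h r l Hd (E / Rabs (R - r))) as [d [Hd0 Hd1]].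
  { apply Rdiv_lt_0_compat; unfold E; lra. }
  set (t := Rmin 1 (d / (2 * Rabs (R - r)))).
  assert (Ht0 : 0 < t).
  { unfold t; apply Rmin_case; [lra|]. apply Rdiv_lt_0_compat; lra. }
  assert (Ht1 : t <= 1) by (unfold t; apply Rmin_l).
  assert (Ht2 : t * Rabs (R - r) < d).
  { assert (t <= d / (2 * Rabs (R - r))) by (unfold t; apply Rmin_r).
    apply Rle_lt_trans with (d / (2 * Rabs (R - r)) * Rabs (R - r)).
    apply Rmult_le_compat_r; lra. field_simplify; lra. }
  set (k := t * (R - r)).
  assert (Hk : k <> 0) by (unfold k; apply Rmult_integral_contrapositive; split; lra).
  assert (Hk' : Rabs k < d) by (unfold k; rewrite Rabs_mult, Rabs_pos_eq; lra).
  specialize (Hd1 k Hk Hk').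
  set (Q := (h (r + k) - h r) / k) in *.
  assert (HQ : h (r + k) - h r = Q * k) by (unfold Q; field; auto).
  specialize (Hc R r t HR Hr ltac:(lra)).
  replace (t * R + (1 - t) * r) with (r + k) in Hc by (unfold k; ring).
  assert (H1 : h R - h r <= Q * (R - r)).
  { apply Rmult_le_reg_l with t; auto.
    replace (t * (Q * (R - r))) with (Q * k) by (unfold k; ring). fold k in HQ. lra. }
  assert (H2 : (Q - l) * (R - r) < E).
  { apply Rle_lt_trans with (Rabs (Q - l) * Rabs (R - r)).
    rewrite <- Rabs_mult. apply Rle_abs.
    apply Rmult_lt_reg_r with (/ Rabs (R - r)). apply Rinv_0_lt_compat; auto.
    rewrite Rmult_assoc, Rinv_r by lra. rewrite Rmult_1_r. exact Hd1. }
  unfold E in H2. lra.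
Qed.

Lemma sum3sq x y z : 0 <= x*x+y*y+z*z.
Proof.
  pose proof (Rle_0_sqr x); pose proof (Rle_0_sqr y); pose proof (Rle_0_sqr z).
  unfold Rsqr in *; lra.
Qed.

Definition hh (th : R -> R -> R) := fun x => th x 1.

Lemma th_hom (th : R -> R -> R) (H : theta_hyp th) s t : 0 <= s -> 0 < t -> th s t = t * th (s/t) 1.
Proof.
  intros Hs Ht. destruct H as (_ & _ & Hh & _).
  rewrite <- Hh. f_equal; field; lra. lra.
  split. apply Rdiv_le_0_compat; lra. lra.
Qed.

Lemma th_ex1 (th : R -> R -> R) (H : theta_hyp th) s t : 0 < s -> 0 < t -> ex_derive (fun x => th x t) s.
Proof.
  intros. destruct H as (_ & _ & _ & _ & Hs & _).
  apply (Hs nil s t). split; auto.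
Qed.

Lemma th_ex2 (th : R -> R -> R) (H : theta_hyp th) s t : 0 < s -> 0 < t -> ex_derive (fun y => th s y) t.
Proof.
  intros. destruct H as (_ & _ & _ & _ & Hs & _).
  apply (Hs nil s t). split; auto.
Qed.

Lemma d1_formula (th : R -> R -> R) (H : theta_hyp th) s t : 0 < s -> 0 < t -> Defs.d1 th s t = Derive (hh th) (s/t).
Proof.
  intros Hs Ht. unfold Defs.d1.
  rewrite (Derive_ext_loc _ (fun x => t * th (x/t) 1)).
  2:{ apply locally_interval with 0 p_infty; simpl; auto.
      intros y Hy _. apply (th_hom th H); lra. }
  apply is_derive_unique. auto_derive.
  - apply (th_ex1 th H). apply Rdiv_lt_0_compat; lra. lra.
  - unfold hh, Rdiv. field. lra.
Qed.

Lemma d2_formula (th : R -> R -> R) (H : theta_hyp th) s t : 0 < s -> 0 < t ->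
  Defs.d2 th s t = (hh th) (s/t) - (s/t) * Derive (hh th) (s/t).
Proof.
  intros Hs Ht. unfold Defs.d2.
  rewrite (Derive_ext_loc _ (fun y => y * th (s/y) 1)).
  2:{ apply locally_interval with 0 p_infty; simpl; auto.
      intros y Hy _. apply (th_hom th H); lra. }
  apply is_derive_unique. auto_derive.
  - repeat split; try lra. apply (th_ex1 th H). apply Rdiv_lt_0_compat; lra. lra.
  - unfold hh, Rdiv. field. lra.
Qed.

Lemma euler (th : R -> R -> R) (H : theta_hyp th) s t : 0 < s -> 0 < t -> s * Defs.d1 th s t + t * Defs.d2 th s t = th s t.
Proof.
  intros Hs Ht. rewrite (d1_formula th H), (d2_formula th H), (th_hom th H s t) by lra.
  unfold hh. field. lra.
Qed.

Lemma hh_concave (th : R -> R -> R) (H : theta_hyp th) : forall x y lam, 0 < x -> 0 < y -> 0 <= lam <= 1 ->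
     lam * (hh th) x + (1 - lam) * (hh th) y <= (hh th) (lam * x + (1 - lam) * y).
Proof.
  intros x y lam Hx Hy Hl. destruct H as (_ & Hc & _). unfold hh.
  pose proof (Hc x 1 y 1 lam ltac:(split; lra) ltac:(split; lra) Hl) as Hc'.
  replace (lam * 1 + (1 - lam) * 1) with 1 in Hc' by ring. exact Hc'.
Qed.

Lemma tangent (th : R -> R -> R) (H : theta_hyp th) s t S T : 0 < s -> 0 < t -> 0 < S -> 0 < T ->
  th S T <= S * Defs.d1 th s t + T * Defs.d2 th s t.
Proof.
  intros Hs Ht HS HT. rewrite (d1_formula th H), (d2_formula th H), (th_hom th H S T) by lra.
  assert (Hr : 0 < s/t) by (apply Rdiv_lt_0_compat; lra).
  assert (HR : 0 < S/T) by (apply Rdiv_lt_0_compat; lra).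
  pose proof (deriv_concave (hh th) (s/t) (S/T) (Derive (hh th) (s/t)) (hh_concave th H) Hr HR
    (Derive_correct _ _ (th_ex1 th H _ _ Hr Rlt_0_1))) as Hc.
  apply Rmult_le_compat_l with (r := T) in Hc; [|lra].
  fold ((hh th) (S/T)).
  replace (S * Derive (hh th) (s / t) + T * ((hh th) (s / t) - s / t * Derive (hh th) (s / t)))
    with (T * ((hh th) (s / t) + Derive (hh th) (s / t) * (S / T - s / t))) by (field; lra).
  exact Hc.
Qed.

Lemma d1_nonneg (th : R -> R -> R) (H : theta_hyp th) s t : 0 < s -> 0 < t -> 0 <= Defs.d1 th s t.
Proof.
  intros Hs Ht. rewrite (d1_formula th H) by lra.
  assert (Hr : 0 < s/t) by (apply Rdiv_lt_0_compat; lra).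
  apply (deriv_nonneg (hh th) (s/t) _ 1 Rlt_0_1).
  - intros k Hk. destruct H as (_ & _ & _ & _ & _ & _ & _ & _ & Hm & _).
    unfold hh. apply Hm; lra.
  - apply Derive_correct. apply (th_ex1 th H); lra.
Qed.

Lemma d2_nonneg (th : R -> R -> R) (H : theta_hyp th) s t : 0 < s -> 0 < t -> 0 <= Defs.d2 th s t.
Proof.
  intros Hs Ht. unfold Defs.d2.
  apply (deriv_nonneg (fun y => th s y) t _ 1 Rlt_0_1).
  - intros k Hk. destruct H as (_ & _ & _ & _ & _ & _ & _ & _ & _ & Hm).
    apply Hm; lra.
  - apply Derive_correct. apply (th_ex2 th H); lra.
Qed.


Lemma key (w1 w2 w3 n1 n2 n3 u1 u2 u3 v1 v2 v3 tau lam : R) :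
 w1*n1+w2*n2+w3*n3 = 0 -> u1*v1+u2*v2+u3*v3 = 0 ->
 w1*v1+w2*v2+w3*v3 <= 0 -> u1*n1+u2*n2+u3*n3 <= 0 ->
 0 <= w1*u1+w2*u2+w3*u3 -> 0 < n1*v1+n2*v2+n3*v3 ->
 0 < u3 -> v3 = 1 -> 0 < w3 -> n3 = 1 -> 0 < tau -> 0 <= lam ->
 (tau*w1+lam*n1)*(u2*v3 - u3*v2) + (tau*w2+lam*n2)*(u3*v1 - u1*v3)
   + (tau*w3+lam*n3)*(u1*v2 - u2*v1) = 0 ->
 exists al, 0 < al /\ tau*w1 = al*u1 /\ tau*w2 = al*u2 /\ tau*w3 = al*u3.
Proof.
  intros Hwn Huv Hwv Hun Hwu Hnv Hu3 Hv3 Hw3 Hn3 Htau Hlam Hdet.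
  set (p1 := tau*w1+lam*n1) in *. set (p2 := tau*w2+lam*n2) in *.
  set (p3 := tau*w3+lam*n3) in *.
  set (uu := u1*u1+u2*u2+u3*u3). set (vv := v1*v1+v2*v2+v3*v3).
  assert (Huu : 0 < uu) by (unfold uu; nra).
  assert (Hvv : 0 < vv) by (unfold vv; nra).
  set (G := uu*vv). assert (HG : 0 < G) by (unfold G; nra).
  set (pu := p1*u1+p2*u2+p3*u3). set (pv := p1*v1+p2*v2+p3*v3).
  set (a := pu*vv). set (b := pv*uu).
  set (uv := u1*v1+u2*v2+u3*v3) in *.
  set (dt := p1*(u2*v3 - u3*v2) + p2*(u3*v1 - u1*v3) + p3*(u1*v2 - u2*v1)) in *.
  assert (E1 : G*p1 = a*u1 + b*v1).
  { assert (G*p1 - uv*uv*p1 = (pu*vv - pv*uv)*u1 + (pv*uu - pu*uv)*v1 + dt*(u2*v3 - u3*v2))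
      by (unfold G, uv, pu, pv, uu, vv, dt; ring).
    rewrite Huv, Hdet in H. unfold a, b. lra. }
  assert (E2 : G*p2 = a*u2 + b*v2).
  { assert (G*p2 - uv*uv*p2 = (pu*vv - pv*uv)*u2 + (pv*uu - pu*uv)*v2 + dt*(u3*v1 - u1*v3))
      by (unfold G, uv, pu, pv, uu, vv, dt; ring).
    rewrite Huv, Hdet in H. unfold a, b. lra. }
  assert (E3 : G*p3 = a*u3 + b*v3).
  { assert (G*p3 - uv*uv*p3 = (pu*vv - pv*uv)*u3 + (pv*uu - pu*uv)*v3 + dt*(u1*v2 - u2*v1))
      by (unfold G, uv, pu, pv, uu, vv, dt; ring).
    rewrite Huv, Hdet in H. unfold a, b. lra. }
  assert (Epn : G*(p1*n1+p2*n2+p3*n3) = a*(u1*n1+u2*n2+u3*n3) + b*(n1*v1+n2*v2+n3*v3)).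
  { replace (G*(p1*n1+p2*n2+p3*n3)) with ((G*p1)*n1+(G*p2)*n2+(G*p3)*n3) by ring.
    rewrite E1, E2, E3. ring. }
  assert (Epw : G*(p1*w1+p2*w2+p3*w3) = a*(w1*u1+w2*u2+w3*u3) + b*(w1*v1+w2*v2+w3*v3)).
  { replace (G*(p1*w1+p2*w2+p3*w3)) with ((G*p1)*w1+(G*p2)*w2+(G*p3)*w3) by ring.
    rewrite E1, E2, E3. ring. }
  assert (Hpn : 0 <= p1*n1+p2*n2+p3*n3).
  { replace (p1*n1+p2*n2+p3*n3) with (tau*(w1*n1+w2*n2+w3*n3) + lam*(n1*n1+n2*n2+n3*n3))
      by (unfold p1, p2, p3; ring). rewrite Hwn.
    assert (0 <= n1*n1+n2*n2+n3*n3) by (pose proof (Rle_0_sqr n1); pose proof (Rle_0_sqr n2); pose proof (Rle_0_sqr n3); unfold Rsqr in *; lra).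
    rewrite Rmult_0_r, Rplus_0_l. apply Rmult_le_pos; lra. }
  assert (Hpw : 0 < p1*w1+p2*w2+p3*w3).
  { replace (p1*w1+p2*w2+p3*w3) with (tau*(w1*w1+w2*w2+w3*w3) + lam*(w1*n1+w2*n2+w3*n3))
      by (unfold p1, p2, p3; ring). rewrite Hwn.
    assert (0 < w1*w1+w2*w2+w3*w3) by (pose proof (Rle_0_sqr w1); pose proof (Rle_0_sqr w2); pose proof (Rlt_0_sqr w3); unfold Rsqr in *; nra).
    rewrite Rmult_0_r, Rplus_0_r. apply Rmult_lt_0_compat; lra. }
  assert (Hp3 : 0 < p3) by (unfold p3; nra).
  assert (Hb : 0 <= b).
  { destruct (Rle_or_lt 0 b) as [|Hb]; auto. exfalso.
    destruct (Rle_or_lt 0 a) as [Ha|Ha].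
    - assert (a*(u1*n1+u2*n2+u3*n3) <= 0) by nra.
      assert (b*(n1*v1+n2*v2+n3*v3) < 0) by nra. nra.
    - rewrite Hv3 in E3. nra. }
  assert (Ha : 0 < a).
  { destruct (Rle_or_lt a 0) as [Ha|Ha]; auto. exfalso.
    assert (a*(w1*u1+w2*u2+w3*u3) <= 0) by nra.
    assert (b*(w1*v1+w2*v2+w3*v3) <= 0) by nra. nra. }
  set (al := a / G). set (be := b / G).
  assert (F1 : p1 = al*u1 + be*v1) by (unfold al, be; apply Rmult_eq_reg_l with G; [|lra]; rewrite E1; field; lra).
  assert (F2 : p2 = al*u2 + be*v2) by (unfold al, be; apply Rmult_eq_reg_l with G; [|lra]; rewrite E2; field; lra).
  assert (F3 : p3 = al*u3 + be*v3) by (unfold al, be; apply Rmult_eq_reg_l with G; [|lra]; rewrite E3; field; lra).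
  assert (Hal : 0 < al) by (unfold al; apply Rdiv_lt_0_compat; lra).
  assert (Hbe : 0 <= be) by (unfold be, Rdiv; apply Rmult_le_pos; [lra| left; apply Rinv_0_lt_compat; lra]).
  set (d1 := tau*w1 - al*u1). set (d2 := tau*w2 - al*u2). set (d3 := tau*w3 - al*u3).
  assert (D1 : d1 = be*v1 - lam*n1) by (unfold d1; unfold p1 in F1; lra).
  assert (D2 : d2 = be*v2 - lam*n2) by (unfold d2; unfold p2 in F2; lra).
  assert (D3 : d3 = be*v3 - lam*n3) by (unfold d3; unfold p3 in F3; lra).
  assert (S : d1*d1+d2*d2+d3*d3 = be*tau*(w1*v1+w2*v2+w3*v3) - be*al*uv
     - lam*tau*(w1*n1+w2*n2+w3*n3) + lam*al*(u1*n1+u2*n2+u3*n3)).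
  { transitivity (d1*(be*v1 - lam*n1) + d2*(be*v2 - lam*n2) + d3*(be*v3 - lam*n3)).
    rewrite <- D1, <- D2, <- D3; ring. unfold d1, d2, d3, uv; ring. }
  rewrite Huv, Hwn in S.
  assert (be*tau*(w1*v1+w2*v2+w3*v3) <= 0).
  { assert (0 <= be*tau) by nra. nra. }
  assert (lam*al*(u1*n1+u2*n2+u3*n3) <= 0).
  { assert (0 <= lam*al) by nra. nra. }
  assert (Z : d1*d1+d2*d2+d3*d3 <= 0) by lra.
  exists al. split; auto.
  assert (d1 = 0) by nra. assert (d2 = 0) by nra. assert (d3 = 0) by nra.
  unfold d1, d2, d3 in *. repeat split; lra.
Qed.

Lemma rep_exists a b : 0 < a -> 0 < b ->
  sqrt (a*b) * sqrt (a/b) = a /\ sqrt (a*b) * / sqrt (a/b) = b.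
Proof.
  intros Ha Hb. split.
  - rewrite <- sqrt_mult. replace (a*b*(a/b)) with (a*a) by (field; lra).
    apply sqrt_square; lra. nra. apply Rlt_le, Rdiv_lt_0_compat; lra.
  - rewrite <- sqrt_inv, <- sqrt_mult. replace (a*b*/(a/b)) with (b*b) by (field; lra).
    apply sqrt_square; lra. nra. left; apply Rinv_0_lt_compat, Rdiv_lt_0_compat; lra.
Qed.

Lemma rep_unique a b q t : 0 < q -> 0 < t -> a = t * sqrt q -> b = t * / sqrt q ->
  q = a / b /\ t = sqrt (a*b).
Proof.
  intros Hq Ht Ha Hb.
  assert (Hs : 0 < sqrt q) by (apply sqrt_lt_R0; auto).
  assert (Hss : sqrt q * sqrt q = q) by (apply sqrt_sqrt; lra).
  split.
  - subst. rewrite <- Hss at 1. field. lra.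
  - replace (a*b) with (t*t) by (subst; field; lra). rewrite sqrt_square; lra.
Qed.

Theorem lemma4p5 (th : R -> R -> R) (p pp : vec3) :
  theta_hyp th ->
  is_proj th p pp ->
  0 < v1 pp -> 0 < v2 pp -> v3 pp = th (v1 pp) (v2 pp) ->
  exists q tau,
    0 < q /\ 0 < tau /\ pp = scal3 tau (wq th q) /\
    (forall q' tau', 0 < q' -> 0 < tau' -> pp = scal3 tau' (wq th q') ->
       q' = q /\ tau' = tau) /\
    dot3 p (cross3 (wq th q) (nq th q)) = 0 /\
    (forall q', 0 < q' -> dot3 p (cross3 (wq th q') (nq th q')) = 0 -> q' = q) /\
    tau = dot3 p (scal3 (/ (norm3 (wq th q)) ^ 2) (wq th q)).
Proof.
  intros Hth [HK Hmin] Ha Hb Hc.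
  destruct pp as [[a b] c]. unfold v1, v2, v3 in Ha, Hb, Hc; simpl in Ha, Hb, Hc. subst c.
  destruct p as [[P1 P2] P3].
  set (f1 := Defs.d1 th a b). set (f2 := Defs.d2 th a b). set (lam := P3 - th a b).
  assert (Hthpos : forall s t, 0 < s -> 0 < t -> 0 < th s t)
    by (destruct Hth as (_&_&_&_&_&_&_&Hp&_); intros; apply Hp; split; auto).
  assert (Hdist : forall x y z, 0 <= x -> 0 <= y -> 0 <= z -> z <= th x y ->
     (P1-a)*(P1-a) + (P2-b)*(P2-b) + (P3 - th a b)*(P3 - th a b)
       <= (P1-x)*(P1-x) + (P2-y)*(P2-y) + (P3-z)*(P3-z)).
  { intros x y z Hx Hy Hz Hzt. specialize (Hmin ((x,y),z)).
    unfold norm3, dot3, sub3, inK, v1, v2, v3 in Hmin; simpl in Hmin.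
    apply sqrt_le_0; [apply sum3sq|apply sum3sq|]. apply Hmin. auto. }
  assert (E1 : P1 - a = - lam * f1).
  { set (phi := fun x => (P1-x)*(P1-x) + (P2-b)*(P2-b) + (P3 - th x b)*(P3 - th x b)).
    assert (Hd : is_derive phi a (-2*(P1-a) - 2*(P3 - th a b)*f1)).
    { unfold phi, f1, Defs.d1. auto_derive. repeat split; apply (th_ex1 th Hth); auto. ring. }
    assert (L : -2*(P1-a) - 2*(P3 - th a b)*f1 = 0).
    { apply (deriv_min phi a _ a Ha); auto. intros k Hk. unfold phi.
      apply Rabs_def2 in Hk.
      apply Hdist; try lra. left; apply Hthpos; lra. }
    unfold lam. lra. }
  assert (E2 : P2 - b = - lam * f2).
  { set (phi := fun y => (P1-a)*(P1-a) + (P2-y)*(P2-y) + (P3 - th a y)*(P3 - th a y)).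
    assert (Hd : is_derive phi b (-2*(P2-b) - 2*(P3 - th a b)*f2)).
    { unfold phi, f2, Defs.d2. auto_derive. repeat split; apply (th_ex2 th Hth); auto. ring. }
    assert (L : -2*(P2-b) - 2*(P3 - th a b)*f2 = 0).
    { apply (deriv_min phi b _ b Hb); auto. intros k Hk. unfold phi.
      apply Rabs_def2 in Hk.
      apply Hdist; try lra. left; apply Hthpos; lra. }
    unfold lam. lra. }
  assert (Hlam : 0 <= lam).
  { destruct (Rle_or_lt 0 lam) as [|Hl]; auto. exfalso.
    set (e := Rmin (-lam) (th a b)).
    assert (He : 0 < e) by (unfold e; apply Rmin_case; [lra| apply Hthpos; lra]).
    assert (He1 : e <= -lam) by (unfold e; apply Rmin_l).
    assert (He2 : e <= th a b) by (unfold e; apply Rmin_r).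
    pose proof (Hdist a b (th a b - e) ltac:(lra) ltac:(lra) ltac:(lra) ltac:(lra)) as Hd.
    assert (e*(2*lam+e) < 0) by (apply Rmult_pos_neg; lra).
    unfold lam in *. nra. }
  set (q := a / b). set (tau := sqrt (a*b)). set (sq := sqrt q).
  assert (Hq : 0 < q) by (unfold q; apply Rdiv_lt_0_compat; lra).
  assert (Htau : 0 < tau) by (unfold tau; apply sqrt_lt_R0; apply Rmult_lt_0_compat; lra).
  assert (Hsq : 0 < sq) by (unfold sq; apply sqrt_lt_R0; lra).
  assert (Hisq : 0 < / sq) by (apply Rinv_0_lt_compat; lra).
  destruct (rep_exists a b Ha Hb) as [Ra Rb]. fold q tau sq in Ra, Rb.
  assert (Hr : sq / / sq = a / b).
  { unfold Rdiv at 1. rewrite Rinv_inv. unfold sq. rewrite sqrt_sqrt; [reflexivity| lra]. }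
  set (D1 := Defs.d1 th sq (/ sq)). set (D2 := Defs.d2 th sq (/ sq)).
  set (F := th sq (/ sq)).
  assert (Hf1 : f1 = D1).
  { unfold f1, D1. rewrite (d1_formula th Hth a b), (d1_formula th Hth sq (/sq)) by lra.
    rewrite Hr. reflexivity. }
  assert (Hf2 : f2 = D2).
  { unfold f2, D2. rewrite (d2_formula th Hth a b), (d2_formula th Hth sq (/sq)) by lra.
    rewrite Hr. reflexivity. }
  assert (Hthw : th a b = tau * F).
  { rewrite <- Ra, <- Rb. unfold F. destruct Hth as (_&_&Hh&_).
    apply Hh; [lra| split; lra]. }
  assert (HP1 : P1 = tau * sq + lam * (- D1)) by (rewrite <- Hf1; lra).
  assert (HP2 : P2 = tau * / sq + lam * (- D2)) by (rewrite <- Hf2; lra).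
  assert (HP3 : P3 = tau * F + lam * 1) by (unfold lam in *; lra).
  assert (HF : 0 < F) by (apply Hthpos; lra).
  assert (Eul : sq * D1 + / sq * D2 = F) by (apply (euler th Hth); lra).
  exists q, tau. split; [auto|]. split; [auto|].
  split.
  { unfold scal3, wq, v1, v2, v3; simpl. fold sq F. rewrite <- Hthw, Ra, Rb. reflexivity. }
  split.
  { intros q' t' Hq' Ht' Heq.
    unfold scal3, wq, v1, v2, v3 in Heq; simpl in Heq. injection Heq; intros E3 E2' E1'.
    destruct (rep_unique a b q' t' Hq' Ht' E1' E2') as [X Y]. split; auto. }
  split.
  { unfold dot3, cross3, wq, nq, v1, v2, v3; simpl. fold sq D1 D2 F.
    rewrite HP1, HP2, HP3. ring. }
  split.
  { intros q' Hq' Hdot.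
    set (sq' := sqrt q') in *.
    assert (Hsq' : 0 < sq') by (unfold sq'; apply sqrt_lt_R0; lra).
    assert (Hisq' : 0 < / sq') by (apply Rinv_0_lt_compat; lra).
    set (D1' := Defs.d1 th sq' (/ sq')) in *. set (D2' := Defs.d2 th sq' (/ sq')) in *.
    set (F' := th sq' (/ sq')) in *.
    assert (HF' : 0 < F') by (apply Hthpos; lra).
    assert (Eul' : sq' * D1' + / sq' * D2' = F') by (apply (euler th Hth); lra).
    assert (T1 : F <= sq * D1' + / sq * D2') by (apply (tangent th Hth); lra).
    assert (T2 : F' <= sq' * D1 + / sq' * D2) by (apply (tangent th Hth); lra).
    assert (N1 : 0 <= D1) by (apply (d1_nonneg th Hth); lra).
    assert (N2 : 0 <= D2) by (apply (d2_nonneg th Hth); lra).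
    assert (N1' : 0 <= D1') by (apply (d1_nonneg th Hth); lra).
    assert (N2' : 0 <= D2') by (apply (d2_nonneg th Hth); lra).
    unfold dot3, cross3, wq, nq, v1, v2, v3 in Hdot; simpl in Hdot. fold sq' D1' D2' F' in Hdot.
    rewrite HP1, HP2, HP3 in Hdot.
    destruct (key sq (/sq) F (-D1) (-D2) 1 sq' (/sq') F' (-D1') (-D2') 1 tau lam)
      as [al [Hal [A1 [A2 A3]]]]; try lra.
    - assert (0 <= sq * sq') by (apply Rmult_le_pos; lra).
      assert (0 <= /sq * /sq') by (apply Rmult_le_pos; lra).
      assert (0 <= F * F') by (apply Rmult_le_pos; lra). lra.
    - assert (0 <= D1 * D1') by (apply Rmult_le_pos; lra).
      assert (0 <= D2 * D2') by (apply Rmult_le_pos; lra). lra.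
    - rewrite Ra in A1. rewrite Rb in A2.
      destruct (rep_unique a b q' al Hq' Hal A1 A2) as [X Y]. auto. }
  unfold norm3, dot3, scal3, wq, v1, v2, v3; simpl. fold sq F.
  set (ww := sq * sq + / sq * / sq + F * F).
  assert (Hww : 0 < ww).
  { unfold ww. assert (0 < F * F) by (apply Rmult_lt_0_compat; lra).
    pose proof (sum3sq sq (/sq) 0). lra. }
  rewrite Rmult_1_r, sqrt_sqrt by lra.
  rewrite HP1, HP2, HP3.
  transitivity (tau * ww / ww - lam * (sq * D1 + / sq * D2 - F) / ww).
  { rewrite Eul. field. lra. }
  assert (Eww : ww = sq * sq + / sq * / sq + F * F) by reflexivity. clearbody ww.
  rewrite Eww at 1. field. split; lra.
Qed.
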